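(* In the continuous MRA model, for any $L\ge1$ and any $\theta,\theta_*\in\mathbb{R}^d$, \[s_1(\theta)=\tfrac12\big(\theta^{(0)}-\theta_*^{(0)}\big)^2,\qquad s_2(\theta)=\tfrac14\big((\theta^{(0)})^2-(\theta_*^{(0)})^2\big)^2+\tfrac18\sum_{l=1}^L\big(r_l(\theta)^2-r_l(\theta_* )^2\big)^2,\] \[s_3(\theta)=\tfrac1{48}\big((u^{(0)}(\theta))^3-(u^{(0)}(\theta_* ))^3\big)^2+\tfrac1{16}\sum_{\substack{l,l',l''=0\\ l=l'+l''}}^L\Big|u^{(l)}(\theta)\overline{u^{(l')}(\theta)u^{(l'')}(\theta)}-u^{(l)}(\theta_* )\overline{u^{(l')}(\theta_* )u^{(l'')}(\theta_* )}\Big|^2\] \[=\tfrac1{12}\big((\theta^{(0)})^3-(\theta_*^{(0)})^3\big)^2+\tfrac18\sum_{l=1}^L\big(\theta^{(0)}r_l(\theta)^2-\theta_*^{(0)}r_l(\theta_* )^2\big)^2+\tfrac1{16}\sum_{\substack{l,l',l''=1\\ l=l'+l''}}^L\Big(r_{l,l',l''}(\theta)^2+r_{l,l',l''}(\theta_* )^2-2r_{l,l',l''}(\theta)r_{l,l',l''}(\theta_* )\cos\big(\lambda_{l,l',l''}(\theta_* )-\lambda_{l,l',l''}(\theta)\big)\Big).\]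
   Context: Continuous MRA model: $\theta=(\theta^{(0)},\theta_1^{(1)},\theta_2^{(1)},\dots,\theta_1^{(L)},\theta_2^{(L)})\in\mathbb{R}^d$, $d=2L+1$; $\mathsf{G}\subset\mathsf{O}(d)$ is the group of $g=\operatorname{diag}(1,R_1(\mathfrak g),\dots,R_L(\mathfrak g))$, $\mathfrak g\in[0,1)$, $R_l(\mathfrak g)=\begin{pmatrix}\cos2\pi l\mathfrak g&\sin2\pi l\mathfrak g\\-\sin2\pi l\mathfrak g&\cos2\pi l\mathfrak g\end{pmatrix}$, with Haar probability measure $\Lambda$. $T_k(\theta)=\int(g\theta)^{\otimes k}d\Lambda(g)$ and $s_k(\theta)=\frac1{2(k!)}\|T_k(\theta)-T_k(\theta_* )\|_{\mathrm{HS}}^2$ (Euclidean norm of tensor entries). Complex coefficients: $u^{(0)}(\theta)=\theta^{(0)}$ and $u^{(l)}(\theta)=\theta_1^{(l)}+i\theta_2^{(l)}=r_l(\theta)e^{i\lambda_l(\theta)}$ for $l\ge1$ (magnitude $r_l$, phase $\lambda_l$). $r_{l,l',l''}=r_lr_{l'}r_{l''}$ and $\lambda_{l,l',l''}=\lambda_l-\lambda_{l'}-\lambda_{l''}$. *)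

(* Defs.v *)
From Stdlib Require Import Reals List Arith.
From Coquelicot Require Import Coquelicot.
Import ListNotations.
Open Scope R_scope.

Definition rsum (a n : nat) (f : nat -> R) : R :=
  fold_right Rplus 0 (map f (seq a n)).

(* Vectors theta in R^d, d = 2L+1, are represented as nat -> R; only the
   coordinates 0..2L matter.  Coordinate 0 is theta^(0); for 1 <= l <= L,
   coordinate 2l-1 is theta_1^(l) and coordinate 2l is theta_2^(l). *)
Definition dim (L : nat) : nat := (2 * L + 1)%nat.

(* The group element g = diag(1, R_1(t), ..., R_L(t)) as a d x d matrix. *)
Definition gmat (t : R) (i j : nat) : R :=
  if Nat.eqb i 0 then (if Nat.eqb j 0 then 1 else 0)
  else
    let l := ((i + 1) / 2)%nat in
    let c := cos (2 * PI * INR l * t) in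
    let s := sin (2 * PI * INR l * t) in
    if Nat.odd i then
      (if Nat.eqb j i then c else if Nat.eqb j (i + 1) then s else 0)
    else
      (if Nat.eqb j (i - 1) then - s else if Nat.eqb j i then c else 0).

Definition gact (L : nat) (t : R) (theta : nat -> R) (i : nat) : R :=
  rsum 0 (dim L) (fun j => gmat t i j * theta j).

Definition tens_entry (L : nat) (t : R) (theta : nat -> R) (idx : list nat) : R :=
  fold_right Rmult 1 (map (gact L t theta) idx).

(* Entry of T_k(theta) = int (g theta)^{(x) k} dLambda(g); the Haar
   probability measure on G is the image of the uniform measure on [0,1). *)
Definition Tk (L : nat) (theta : nat -> R) (idx : list nat) : R :=
  RInt (fun t => tens_entry L t theta idx) 0 1.

Fixpoint tsum (d k : nat) (F : list nat -> R) : R :=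
  match k with
  | O => F []
  | S k' => rsum 0 d (fun i => tsum d k' (fun idx => F (i :: idx)))
  end.

Definition sk (L k : nat) (theta thetas : nat -> R) : R :=
  / (2 * INR (fact k)) *
  tsum (dim L) k (fun idx => (Tk L theta idx - Tk L thetas idx) ^ 2).

Definition ucoef (theta : nat -> R) (l : nat) : C :=
  if Nat.eqb l 0 then RtoC (theta 0%nat)
  else (theta (2 * l - 1)%nat, theta (2 * l)%nat).

Definition rmag (theta : nat -> R) (l : nat) : R := Cmod (ucoef theta l).

Definition is_phase (L : nat) (theta : nat -> R) (lam : nat -> R) : Prop :=
  forall l, (1 <= l <= L)%nat ->
    ucoef theta l = (rmag theta l * cos (lam l), rmag theta l * sin (lam l)).

(* Main.v *)
Require Import Defs.
From Stdlib Require Import Reals List Arith Lia Lra ZArith.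
From Coquelicot Require Import Coquelicot.
Import ListNotations.
Open Scope R_scope.

Lemma rsum_0 a f : rsum a 0 f = 0.
Proof. reflexivity. Qed.
Lemma rsum_S a n f : rsum a (S n) f = f a + rsum (S a) n f.
Proof. reflexivity. Qed.

Lemma rsum_ext_in a n f g :
  (forall i, (a <= i < a + n)%nat -> f i = g i) -> rsum a n f = rsum a n g.
Proof.
  revert a; induction n; intros a H; [reflexivity|].
  rewrite !rsum_S. f_equal; [apply H; lia|]. apply IHn; intros; apply H; lia.
Qed.

Lemma rsum_ext a n f g : (forall i, f i = g i) -> rsum a n f = rsum a n g.
Proof. intros; apply rsum_ext_in; auto. Qed.

Lemma rsum_plus a n f g : rsum a n (fun i => f i + g i) = rsum a n f + rsum a n g.
Proof. revert a; induction n; intros a; [rewrite !rsum_0; ring|]. rewrite !rsum_S, IHn; ring. Qed.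

Lemma rsum_scal a n c f : rsum a n (fun i => c * f i) = c * rsum a n f.
Proof. revert a; induction n; intros a; [rewrite !rsum_0; ring|]. rewrite !rsum_S, IHn; ring. Qed.

Lemma rsum_zero a n : rsum a n (fun _ => 0) = 0.
Proof. revert a; induction n; intros a; [reflexivity|]. rewrite rsum_S, IHn; ring. Qed.

Lemma rsum_ind a n p x : (a <= p < a + n)%nat ->
  rsum a n (fun j => if Nat.eqb j p then x else 0) = x.
Proof.
  revert a; induction n; intros a H; [lia|]. rewrite rsum_S.
  destruct (Nat.eqb_spec a p).
  - subst. rewrite (rsum_ext_in _ _ _ (fun _ => 0)). rewrite rsum_zero; ring.
    intros i Hi. destruct (Nat.eqb_spec i p); [lia|reflexivity].
  - rewrite IHn by lia. ring.
Qed.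

Lemma rsum_ind' a n p x : (a <= p < a + n)%nat ->
  rsum a n (fun j => if Nat.eqb p j then x else 0) = x.
Proof.
  intros H. transitivity (rsum a n (fun j => if Nat.eqb j p then x else 0)).
  - apply rsum_ext; intros i. rewrite Nat.eqb_sym; reflexivity.
  - apply rsum_ind; exact H.
Qed.

Lemma rsum_last a n f : rsum a (S n) f = rsum a n f + f (a + n)%nat.
Proof.
  revert a; induction n; intros a.
  - rewrite rsum_S, !rsum_0, Nat.add_0_r; ring.
  - rewrite rsum_S, IHn, rsum_S. replace (S a + n)%nat with (a + S n)%nat by lia. ring.
Qed.

Lemma rsum_swap a n b m (f : nat -> nat -> R) :
  rsum a n (fun i => rsum b m (fun j => f i j)) = rsum b m (fun j => rsum a n (fun i => f i j)).
Proof.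
  revert a; induction n; intros a.
  - rewrite rsum_0. symmetry. rewrite (rsum_ext _ _ _ (fun _ => 0)) by reflexivity. apply rsum_zero.
  - rewrite rsum_S, IHn. rewrite <- rsum_plus. apply rsum_ext; intros; reflexivity.
Qed.

Lemma rsum_mulr a n f c : rsum a n f * c = rsum a n (fun i => f i * c).
Proof. rewrite Rmult_comm, <- rsum_scal. apply rsum_ext; intros; ring. Qed.

Lemma rsum_mult a n b m f g :
  rsum a n f * rsum b m g = rsum a n (fun i => rsum b m (fun j => f i * g j)).
Proof.
  rewrite rsum_mulr. apply rsum_ext; intros i. rewrite <- rsum_scal. reflexivity.
Qed.

Lemma rsum_shift a n f : rsum (S a) n f = rsum a n (fun i => f (S i)).
Proof. revert a; induction n; intros a; [reflexivity|]. rewrite !rsum_S, IHn; reflexivity. Qed.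

Lemma rsum_pairs L f : rsum 0 (2 * L + 1) f =
  f 0%nat + rsum 0 L (fun m => f (2 * m + 1)%nat + f (2 * m + 2)%nat).
Proof.
  induction L.
  - change (2*0+1)%nat with 1%nat. rewrite rsum_S, !rsum_0; ring.
  - replace (2 * S L + 1)%nat with (S (S (2 * L + 1))) by lia.
    rewrite (rsum_last 0 (S (2*L+1))), (rsum_last 0 (2*L+1)), IHL, (rsum_last 0 L).
    rewrite !Nat.add_0_l.
    replace (S (2 * L + 1))%nat with (2 * L + 2)%nat by lia. ring.
Qed.

Lemma tsum_ext d k F G : (forall idx, F idx = G idx) -> tsum d k F = tsum d k G.
Proof.
  revert F G; induction k; intros F G H; simpl; [apply H|].
  apply rsum_ext; intros i; apply IHk; intros; apply H.
Qed.

Lemma tsum_plus d k F G : tsum d k (fun idx => F idx + G idx) = tsum d k F + tsum d k G.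
Proof.
  revert F G; induction k; intros F G; simpl; [reflexivity|].
  rewrite <- rsum_plus. apply rsum_ext; intros i. apply IHk.
Qed.

Lemma tsum_scal d k c F : tsum d k (fun idx => c * F idx) = c * tsum d k F.
Proof.
  revert F; induction k; intros F; simpl; [reflexivity|].
  rewrite <- rsum_scal. apply rsum_ext; intros i. apply IHk.
Qed.

Lemma tsum_prod d k (f g : nat -> R) :
  tsum d k (fun idx => fold_right Rmult 1 (map f idx) * fold_right Rmult 1 (map g idx))
  = (rsum 0 d (fun i => f i * g i)) ^ k.
Proof.
  induction k; simpl; [ring|].
  rewrite rsum_mulr. apply rsum_ext; intros i.
  rewrite <- IHk. rewrite <- tsum_scal. apply tsum_ext; intros idx; simpl; ring.
Qed.

Ltac rring := try (match goal with |- @eq _ ?x ?y => change (@eq R x y) end); ring.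

Lemma RInt_plus' (f g : R -> R) a b : ex_RInt f a b -> ex_RInt g a b ->
  RInt (fun x => f x + g x) a b = RInt f a b + RInt g a b.
Proof. intros; exact (RInt_plus f g a b H H0). Qed.
Lemma RInt_scal' (f : R -> R) a b c : ex_RInt f a b -> RInt (fun x => c * f x) a b = c * RInt f a b.
Proof. intros; exact (RInt_scal f a b c H). Qed.
Lemma ex_RInt_plus' (f g : R -> R) a b : ex_RInt f a b -> ex_RInt g a b ->
  ex_RInt (fun x => f x + g x) a b.
Proof. intros; exact (ex_RInt_plus f g a b H H0). Qed.
Lemma ex_RInt_scal' (f : R -> R) a b c : ex_RInt f a b -> ex_RInt (fun x => c * f x) a b.
Proof. intros; exact (ex_RInt_scal f a b c H). Qed.
Lemma RInt_mulr' (f : R -> R) a b c : ex_RInt f a b -> RInt (fun x => f x * c) a b = RInt f a b * c.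
Proof.
  intros H. rewrite (Rmult_comm (RInt f a b) c), <- RInt_scal' by exact H.
  apply RInt_ext; intros; apply Rmult_comm.
Qed.
Lemma ex_RInt_mulr' (f : R -> R) a b c : ex_RInt f a b -> ex_RInt (fun x => f x * c) a b.
Proof.
  intros H. apply (ex_RInt_ext (fun x => c * f x)); [intros; rring|]. now apply ex_RInt_scal'.
Qed.
Lemma RInt_const' a b (c : R) : RInt (fun _ => c) a b = (b - a) * c.
Proof. rewrite RInt_const. reflexivity. Qed.

Lemma ex_RInt_rsum m n (f : nat -> R -> R) a b :
  (forall i, ex_RInt (f i) a b) -> ex_RInt (fun x => rsum m n (fun i => f i x)) a b.
Proof.
  intros H. revert m; induction n; intros m.
  - apply (ex_RInt_ext (fun _ => 0)); [intros; reflexivity| apply ex_RInt_const].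
  - apply (ex_RInt_plus' (f m) (fun x => rsum (S m) n (fun i => f i x))); auto.
Qed.

Lemma RInt_rsum m n (f : nat -> R -> R) a b :
  (forall i, ex_RInt (f i) a b) ->
  RInt (fun x => rsum m n (fun i => f i x)) a b = rsum m n (fun i => RInt (f i) a b).
Proof.
  intros H. revert m; induction n; intros m.
  - rewrite rsum_0. change (RInt (fun _ => 0) a b = 0). rewrite RInt_const'; rring.
  - rewrite rsum_S, <- IHn.
    apply (RInt_plus' (f m) (fun x => rsum (S m) n (fun i => f i x))); auto.
    apply ex_RInt_rsum; auto.
Qed.

Lemma ex_RInt_tsum d k (F : R -> list nat -> R) a b :
  (forall idx, ex_RInt (fun t => F t idx) a b) -> ex_RInt (fun t => tsum d k (F t)) a b.
Proof.
  revert F; induction k; intros F H; simpl; [apply H|].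
  apply (ex_RInt_rsum 0 d (fun i t => tsum d k (fun idx => F t (i :: idx)))).
  intros i; apply IHk; intros; apply H.
Qed.

Lemma RInt_tsum d k (F : R -> list nat -> R) a b :
  (forall idx, ex_RInt (fun t => F t idx) a b) ->
  tsum d k (fun idx => RInt (fun t => F t idx) a b) = RInt (fun t => tsum d k (F t)) a b.
Proof.
  revert F; induction k; intros F H; simpl; [reflexivity|].
  rewrite (RInt_rsum 0 d (fun i t => tsum d k (fun idx => F t (i :: idx)))).
  - apply rsum_ext; intros i. apply IHk. intros; apply H.
  - intros i; apply ex_RInt_tsum; intros; apply H.
Qed.

Lemma continuous_plus' (f g : R -> R) x : continuous f x -> continuous g x ->
  continuous (fun y => f y + g y) x.
Proof. intros; exact (continuous_plus f g x H H0). Qed.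
Lemma continuous_mult' (f g : R -> R) x : continuous f x -> continuous g x ->
  continuous (fun y => f y * g y) x.
Proof. intros; exact (continuous_mult f g x H H0). Qed.

Lemma cont_rsum m n (f : nat -> R -> R) x :
  (forall i, continuous (f i) x) -> continuous (fun t => rsum m n (fun i => f i t)) x.
Proof.
  intros H. revert m; induction n; intros m.
  - apply continuous_const.
  - apply (continuous_plus' (f m) (fun t => rsum (S m) n (fun i => f i t))); auto.
Qed.

Lemma cont_gmat i j x : continuous (fun t => gmat t i j) x.
Proof.
  unfold gmat; cbv zeta.
  repeat match goal with |- context[if ?b then _ else _] => destruct b end;
  try apply continuous_const;
  apply (@ex_derive_continuous R_AbsRing R_NormedModule); auto_derive; trivial.
Qed.

Lemma cont_gact L th i x : continuous (fun t => gact L t th i) x.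
Proof.
  unfold gact. apply (cont_rsum 0 (dim L) (fun j t => gmat t i j * th j)).
  intros j. apply (continuous_mult' (fun t => gmat t i j) (fun _ => th j)).
  apply cont_gmat. apply continuous_const.
Qed.

Lemma cont_tens L th idx x : continuous (fun t => tens_entry L t th idx) x.
Proof.
  unfold tens_entry. induction idx; simpl.
  - apply continuous_const.
  - apply (continuous_mult' (fun t => gact L t th a)); auto. apply cont_gact.
Qed.

Lemma ex_RInt_cont (f : R -> R) a b : (forall z, continuous f z) -> ex_RInt f a b.
Proof.
  intros H. apply (@ex_RInt_continuous R_CompleteNormedModule). intros; apply H.
Qed.

Lemma ex_tens L th idx c : ex_RInt (fun t => tens_entry L t th idx * c) 0 1.
Proof.
  apply ex_RInt_cont; intros.
  apply (continuous_mult' (fun t => tens_entry L t th idx) (fun _ => c)).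
  apply cont_tens. apply continuous_const.
Qed.
Lemma ex_tens' L th idx c : ex_RInt (fun t => c * tens_entry L t th idx) 0 1.
Proof.
  apply (ex_RInt_ext (fun t => tens_entry L t th idx * c)); [intros; rring|]. apply ex_tens.
Qed.

Definition IPg L th ph t s := rsum 0 (dim L) (fun i => gact L t th i * gact L s ph i).

Lemma Sk_double L k th ph :
  tsum (dim L) k (fun idx => Tk L th idx * Tk L ph idx) =
  RInt (fun t => RInt (fun s => (IPg L th ph t s) ^ k) 0 1) 0 1.
Proof.
  transitivity (tsum (dim L) k (fun idx => RInt (fun t =>
     RInt (fun s => tens_entry L t th idx * tens_entry L s ph idx) 0 1) 0 1)).
  { apply tsum_ext; intros idx. unfold Tk.
    rewrite <- RInt_mulr' by (apply (ex_RInt_ext (fun t => tens_entry L t th idx * 1));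
       [intros; rring| apply ex_tens]).
    apply RInt_ext; intros t _. rewrite RInt_scal'; [reflexivity|].
    apply (ex_RInt_ext (fun t => tens_entry L t ph idx * 1)); [intros; rring| apply ex_tens]. }
  rewrite (RInt_tsum (dim L) k (fun t idx => RInt (fun s => tens_entry L t th idx * tens_entry L s ph idx) 0 1)).
  2:{ intros idx. apply (ex_RInt_ext (fun t => tens_entry L t th idx * Tk L ph idx)).
      - intros t _. unfold Tk. rewrite RInt_scal'; [reflexivity|].
        apply (ex_RInt_ext (fun t => tens_entry L t ph idx * 1)); [intros; rring| apply ex_tens].
      - apply ex_tens. }
  apply RInt_ext; intros t _.
  rewrite (RInt_tsum (dim L) k (fun s idx => tens_entry L t th idx * tens_entry L s ph idx)).
  2:{ intros; apply ex_tens'. }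
  apply RInt_ext; intros s _. unfold IPg, tens_entry. apply tsum_prod.
Qed.

Lemma eqb_if_mult (j p : nat) (x y : R) :
  (if Nat.eqb j p then x else 0) * y = if Nat.eqb j p then x * y else 0.
Proof. destruct (Nat.eqb j p); ring. Qed.

Lemma gact0 L t th : gact L t th 0 = th 0%nat.
Proof.
  unfold gact, gmat. simpl Nat.eqb.
  rewrite (rsum_ext _ _ _ (fun j => if Nat.eqb j 0 then th 0%nat else 0)).
  - apply rsum_ind. unfold dim; lia.
  - intros j. destruct (Nat.eqb_spec j 0); [subst; ring|ring].
Qed.

Lemma div2_odd m : ((2 * m + 1 + 1) / 2 = S m)%nat.
Proof. symmetry. apply (Nat.div_unique _ _ _ 0); lia. Qed.
Lemma div2_even m : ((2 * m + 2 + 1) / 2 = S m)%nat.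
Proof. symmetry. apply (Nat.div_unique _ _ _ 1); lia. Qed.
Lemma odd_odd m : Nat.odd (2 * m + 1) = true.
Proof. apply Nat.odd_spec. exists m; reflexivity. Qed.
Lemma odd_even m : Nat.odd (2 * m + 2) = false.
Proof. replace (2 * m + 2)%nat with (2 * (m + 1))%nat by lia. rewrite Nat.odd_mul. reflexivity. Qed.

Lemma gact_odd L t th m : (m < L)%nat ->
  gact L t th (2 * m + 1) = cos (2 * PI * INR (S m) * t) * th (2 * m + 1)%nat
                           + sin (2 * PI * INR (S m) * t) * th (2 * m + 2)%nat.
Proof.
  intros Hm. unfold gact, gmat. cbv zeta.
  replace (Nat.eqb (2 * m + 1) 0) with false by (symmetry; apply Nat.eqb_neq; lia).
  rewrite div2_odd, odd_odd.
  set (c := cos (2 * PI * INR (S m) * t)). set (s := sin (2 * PI * INR (S m) * t)).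
  rewrite (rsum_ext _ _ _ (fun j => (if Nat.eqb j (2*m+1) then c * th (2*m+1)%nat else 0)
                                + (if Nat.eqb j (2*m+1+1) then s * th (2*m+2)%nat else 0))).
  - rewrite rsum_plus, !rsum_ind; unfold dim; try lia. reflexivity.
  - intros j. destruct (Nat.eqb_spec j (2*m+1)); destruct (Nat.eqb_spec j (2*m+1+1));
      try lia; subst; try ring.
    replace (2*m+1+1)%nat with (2*m+2)%nat by lia. ring.
Qed.

Lemma gact_even L t th m : (m < L)%nat ->
  gact L t th (2 * m + 2) = - sin (2 * PI * INR (S m) * t) * th (2 * m + 1)%nat
                           + cos (2 * PI * INR (S m) * t) * th (2 * m + 2)%nat.
Proof.
  intros Hm. unfold gact, gmat. cbv zeta.
  replace (Nat.eqb (2 * m + 2) 0) with false by (symmetry; apply Nat.eqb_neq; lia).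
  rewrite div2_even, odd_even.
  replace (2 * m + 2 - 1)%nat with (2 * m + 1)%nat by lia.
  set (c := cos (2 * PI * INR (S m) * t)). set (s := sin (2 * PI * INR (S m) * t)).
  rewrite (rsum_ext _ _ _ (fun j => (if Nat.eqb j (2*m+1) then - s * th (2*m+1)%nat else 0)
                                + (if Nat.eqb j (2*m+2) then c * th (2*m+2)%nat else 0))).
  - rewrite rsum_plus, !rsum_ind; unfold dim; try lia. reflexivity.
  - intros j. destruct (Nat.eqb_spec j (2*m+1)); destruct (Nat.eqb_spec j (2*m+2));
      try lia; subst; ring.
Qed.

Lemma phase_fst L th lam m : is_phase L th lam -> (m < L)%nat ->
  th (2 * m + 1)%nat = rmag th (S m) * cos (lam (S m)).
Proof.
  intros H Hm. pose proof (H (S m) ltac:(lia)) as E.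
  apply (f_equal fst) in E. unfold ucoef in E. simpl in E.
  rewrite <- E. f_equal. lia.
Qed.
Lemma phase_snd L th lam m : is_phase L th lam -> (m < L)%nat ->
  th (2 * m + 2)%nat = rmag th (S m) * sin (lam (S m)).
Proof.
  intros H Hm. pose proof (H (S m) ltac:(lia)) as E.
  apply (f_equal snd) in E. unfold ucoef in E. simpl in E.
  rewrite <- E. f_equal. lia.
Qed.

Lemma IPg_form L th ph lam lamp t s :
  is_phase L th lam -> is_phase L ph lamp ->
  IPg L th ph t s = th 0%nat * ph 0%nat +
    rsum 1 L (fun l => rmag th l * rmag ph l * cos (2 * PI * INR l * (t - s) - (lam l - lamp l))).
Proof.
  intros Hth Hph. unfold IPg, dim. rewrite rsum_pairs, !gact0, rsum_shift.
  f_equal. apply rsum_ext_in; intros m Hm. simpl in Hm.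
  rewrite !gact_odd, !gact_even by lia.
  rewrite (phase_fst L th lam m), (phase_snd L th lam m),
          (phase_fst L ph lamp m), (phase_snd L ph lamp m) by (auto; lia).
  replace (2 * PI * INR (S m) * (t - s) - (lam (S m) - lamp (S m))) with
    (2 * PI * INR (S m) * t - 2 * PI * INR (S m) * s - (lam (S m) - lamp (S m))) by ring.
  repeat rewrite ?cos_minus, ?sin_minus. ring.
Qed.

Ltac exri := apply ex_RInt_cont; intros;
  apply (@ex_derive_continuous R_AbsRing R_NormedModule); auto_derive; trivial.

Lemma int_cos_gen (k c : R) : k <> 0 -> sin (c + k) = sin c ->
  RInt (fun s => cos (c + k * s)) 0 1 = 0.
Proof.
  intros Hk Hs.
  assert (H : is_RInt (fun s => cos (c + k * s)) 0 1
      (minus (sin (c + k * 1) / k) (sin (c + k * 0) / k))).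
  { apply (@is_RInt_derive R_CompleteNormedModule (fun s => sin (c + k * s) / k)).
    * intros x _. auto_derive; trivial. field. exact Hk.
    * intros x _. apply (@ex_derive_continuous R_AbsRing R_NormedModule); auto_derive; trivial. }
  rewrite (is_RInt_unique _ _ _ _ H).
  unfold minus, plus, opp; simpl.
  rewrite Rmult_1_r, Rmult_0_r, Rplus_0_r, Hs. field. exact Hk.
Qed.

Lemma int_cos_nat (p : nat) (c : R) :
  RInt (fun s => cos (c + 2 * PI * INR p * s)) 0 1 = if Nat.eqb p 0 then cos c else 0.
Proof.
  destruct p.
  - simpl. rewrite (RInt_ext _ (fun _ => cos c)).
    + rewrite RInt_const'. rring.
    + intros x _. f_equal. ring.
  - simpl Nat.eqb.
    assert (Hp : 0 < INR (S p)) by (apply lt_0_INR; lia).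
    apply int_cos_gen.
    + pose proof PI_RGT_0; nra.
    + replace (c + 2 * PI * INR (S p)) with (c + 2 * INR (S p) * PI) by ring.
      apply sin_period.
Qed.

Lemma int_cos_Z (z : Z) (c : R) :
  RInt (fun s => cos (c + 2 * PI * IZR z * s)) 0 1 = if Z.eqb z 0 then cos c else 0.
Proof.
  destruct z.
  - rewrite <- (int_cos_nat 0). apply RInt_ext; intros; simpl; reflexivity.
  - assert (E : IZR (Z.pos p) = INR (Pos.to_nat p)) by
      (rewrite INR_IZR_INZ, Znat.positive_nat_Z; reflexivity).
    rewrite E, int_cos_nat. simpl Z.eqb.
    destruct (Nat.eqb_spec (Pos.to_nat p) 0); [lia|reflexivity].
  - assert (E : IZR (Z.neg p) = - INR (Pos.to_nat p)) by
      (rewrite INR_IZR_INZ, Znat.positive_nat_Z; reflexivity).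
    rewrite (RInt_ext _ (fun s => cos (- c + 2 * PI * INR (Pos.to_nat p) * s))).
    + rewrite int_cos_nat. simpl Z.eqb.
      destruct (Nat.eqb_spec (Pos.to_nat p) 0); [lia|reflexivity].
    + intros x _. rewrite E, <- cos_neg. f_equal. ring.
Qed.

Lemma int_cs (t : R) (z : Z) (c : R) :
  RInt (fun s => cos (c + 2 * PI * IZR z * (t - s))) 0 1 = if Z.eqb z 0 then cos c else 0.
Proof.
  rewrite (RInt_ext _ (fun s => cos ((c + 2 * PI * IZR z * t) + 2 * PI * IZR (- z) * s))).
  - rewrite int_cos_Z. destruct (Z.eqb_spec z 0).
    + subst. simpl. f_equal. ring.
    + destruct (Z.eqb_spec (- z) 0); [lia|reflexivity].
  - intros x _. rewrite opp_IZR. f_equal. ring.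
Qed.

Lemma prod2 A B : cos A * cos B = / 2 * (cos (A - B) + cos (A + B)).
Proof. rewrite cos_minus, cos_plus. field. Qed.

Lemma prod3 A B C : cos A * cos B * cos C =
  / 4 * (cos (A + B + C) + cos (A + B - C) + cos (A - B + C) + cos (- A + B + C)).
Proof.
  replace (- A + B + C) with (B + C - A) by ring.
  repeat rewrite ?cos_plus, ?cos_minus, ?sin_plus, ?sin_minus. field.
Qed.

Definition Fm (rho psi : nat -> R) (t : R) (l : nat) (s : R) : R :=
  rho l * cos (2 * PI * INR l * (t - s) - psi l).
Definition rsum3 L (f : nat -> nat -> nat -> R) : R :=
  rsum 1 L (fun a => rsum 1 L (fun b => rsum 1 L (fun c => f a b c))).

Lemma rsum3_ext L f g : (forall a b c, f a b c = g a b c) -> rsum3 L f = rsum3 L g.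
Proof.
  intros H. unfold rsum3. apply rsum_ext; intros a; apply rsum_ext; intros b;
  apply rsum_ext; intros c; apply H.
Qed.
Lemma rsum3_plus L f g : rsum3 L (fun a b c => f a b c + g a b c) = rsum3 L f + rsum3 L g.
Proof.
  unfold rsum3. rewrite <- rsum_plus. apply rsum_ext; intros a.
  rewrite <- rsum_plus. apply rsum_ext; intros b. apply rsum_plus.
Qed.
Lemma rsum3_scal L k f : rsum3 L (fun a b c => k * f a b c) = k * rsum3 L f.
Proof.
  unfold rsum3. rewrite <- rsum_scal. apply rsum_ext; intros a.
  rewrite <- rsum_scal. apply rsum_ext; intros b. apply rsum_scal.
Qed.
Lemma rsum3_cab L g : rsum3 L (fun a b c => g c a b) = rsum3 L g.
Proof.
  unfold rsum3.
  rewrite (rsum_ext _ _ _ (fun a => rsum 1 L (fun c => rsum 1 L (fun b => g c a b))))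
    by (intros; apply rsum_swap).
  apply rsum_swap.
Qed.
Lemma rsum3_bac L g : rsum3 L (fun a b c => g b a c) = rsum3 L g.
Proof. unfold rsum3. apply rsum_swap. Qed.

Lemma arg1 (t s psi : R) (l : nat) :
  2 * PI * INR l * (t - s) - psi = - psi + 2 * PI * IZR (Z.of_nat l) * (t - s).
Proof. rewrite <- INR_IZR_INZ. ring. Qed.

Lemma int_F rho psi t l : (1 <= l)%nat -> RInt (Fm rho psi t l) 0 1 = 0.
Proof.
  intros Hl. unfold Fm.
  rewrite RInt_scal' by exri.
  rewrite (RInt_ext _ (fun s => cos (- psi l + 2 * PI * IZR (Z.of_nat l) * (t - s))))
    by (intros; rewrite arg1; reflexivity).
  rewrite int_cs. destruct (Z.eqb_spec (Z.of_nat l) 0); [lia|rring].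
Qed.

Ltac izr := repeat (first [rewrite plus_IZR | rewrite minus_IZR | rewrite opp_IZR]); rewrite <- ?INR_IZR_INZ; ring.

Lemma int_FF rho psi t a b : (1 <= a)%nat -> (1 <= b)%nat ->
  RInt (fun s => Fm rho psi t a s * Fm rho psi t b s) 0 1 =
  if Nat.eqb a b then / 2 * rho a ^ 2 else 0.
Proof.
  intros Ha Hb.
  set (z1 := (Z.of_nat a - Z.of_nat b)%Z). set (z2 := (Z.of_nat a + Z.of_nat b)%Z).
  rewrite (RInt_ext _ (fun s => (/ 2 * rho a * rho b) *
     (cos ((- psi a + psi b) + 2 * PI * IZR z1 * (t - s)) +
      cos ((- psi a - psi b) + 2 * PI * IZR z2 * (t - s))))).
  2:{ intros s _. unfold Fm.
      set (A := 2 * PI * INR a * (t - s) - psi a).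
      set (B := 2 * PI * INR b * (t - s) - psi b).
      replace (- psi a + psi b + 2 * PI * IZR z1 * (t - s)) with (A - B)
        by (unfold A, B, z1; izr).
      replace (- psi a - psi b + 2 * PI * IZR z2 * (t - s)) with (A + B)
        by (unfold A, B, z2; izr).
      transitivity (rho a * rho b * (cos A * cos B)); [rring|].
      rewrite prod2. rring. }
  rewrite RInt_scal' by exri.
  rewrite RInt_plus' by exri.
  rewrite !int_cs. unfold z1, z2.
  destruct (Z.eqb_spec (Z.of_nat a - Z.of_nat b) 0);
  destruct (Z.eqb_spec (Z.of_nat a + Z.of_nat b) 0);
  destruct (Nat.eqb_spec a b); try (exfalso; lia).
  - subst. replace (- psi b + psi b) with 0 by ring. rewrite cos_0. rring.
  - rring.
Qed.

Lemma int_FFF rho psi t a b c : (1 <= a)%nat -> (1 <= b)%nat -> (1 <= c)%nat ->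
  RInt (fun s => Fm rho psi t a s * Fm rho psi t b s * Fm rho psi t c s) 0 1 =
  / 4 * (rho a * rho b * rho c) *
   ((if Nat.eqb c (a + b) then cos (psi c - psi a - psi b) else 0)
  + (if Nat.eqb b (a + c) then cos (psi b - psi a - psi c) else 0)
  + (if Nat.eqb a (b + c) then cos (psi a - psi b - psi c) else 0)).
Proof.
  intros Ha Hb Hc.
  set (z1 := (Z.of_nat a + Z.of_nat b + Z.of_nat c)%Z).
  set (z2 := (Z.of_nat a + Z.of_nat b - Z.of_nat c)%Z).
  set (z3 := (Z.of_nat a - Z.of_nat b + Z.of_nat c)%Z).
  set (z4 := (- Z.of_nat a + Z.of_nat b + Z.of_nat c)%Z).
  rewrite (RInt_ext _ (fun s => (/ 4 * (rho a * rho b * rho c)) *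
     (cos ((- psi a - psi b - psi c) + 2 * PI * IZR z1 * (t - s)) +
      cos ((psi c - psi a - psi b) + 2 * PI * IZR z2 * (t - s)) +
      cos ((psi b - psi a - psi c) + 2 * PI * IZR z3 * (t - s)) +
      cos ((psi a - psi b - psi c) + 2 * PI * IZR z4 * (t - s))))).
  2:{ intros s _. unfold Fm.
      set (A := 2 * PI * INR a * (t - s) - psi a).
      set (B := 2 * PI * INR b * (t - s) - psi b).
      set (C := 2 * PI * INR c * (t - s) - psi c).
      replace (- psi a - psi b - psi c + 2 * PI * IZR z1 * (t - s)) with (A + B + C)
        by (unfold A, B, C, z1; izr).
      replace (psi c - psi a - psi b + 2 * PI * IZR z2 * (t - s)) with (A + B - C)
        by (unfold A, B, C, z2; izr).
      replace (psi b - psi a - psi c + 2 * PI * IZR z3 * (t - s)) with (A - B + C)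
        by (unfold A, B, C, z3; izr).
      replace (psi a - psi b - psi c + 2 * PI * IZR z4 * (t - s)) with (- A + B + C)
        by (unfold A, B, C, z4; izr).
      transitivity (rho a * rho b * rho c * (cos A * cos B * cos C)); [rring|].
      rewrite prod3. rring. }
  rewrite RInt_scal' by exri.
  rewrite !RInt_plus' by exri.
  rewrite !int_cs. unfold z1, z2, z3, z4.
  destruct (Z.eqb_spec (Z.of_nat a + Z.of_nat b + Z.of_nat c) 0); [exfalso; lia|].
  destruct (Z.eqb_spec (Z.of_nat a + Z.of_nat b - Z.of_nat c) 0);
  destruct (Z.eqb_spec (Z.of_nat a - Z.of_nat b + Z.of_nat c) 0);
  destruct (Z.eqb_spec (- Z.of_nat a + Z.of_nat b + Z.of_nat c) 0);
  destruct (Nat.eqb_spec c (a + b)); destruct (Nat.eqb_spec b (a + c));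
  destruct (Nat.eqb_spec a (b + c)); try (exfalso; lia); rring.
Qed.


Definition IPf L a0 rho psi t s := a0 + rsum 1 L (fun l => Fm rho psi t l s).

Section Ints.
Variables (L : nat) (a0 : R) (rho psi : nat -> R) (t : R).
Let F := Fm rho psi t.

Lemma exF l : ex_RInt (F l) 0 1.
Proof. unfold F, Fm. exri. Qed.
Lemma ex_S : ex_RInt (fun s => rsum 1 L (fun l => F l s)) 0 1.
Proof. apply ex_RInt_rsum; intros; apply exF. Qed.
Lemma ex_S2 : ex_RInt (fun s => rsum 1 L (fun a => rsum 1 L (fun b => F a s * F b s))) 0 1.
Proof.
  apply (ex_RInt_rsum 1 L (fun a s => rsum 1 L (fun b => F a s * F b s))); intros.
  apply (ex_RInt_rsum 1 L (fun b s => F i s * F b s)); intros. unfold F, Fm; exri.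
Qed.
Lemma ex_S3 : ex_RInt (fun s => rsum 1 L (fun a => rsum 1 L (fun b => rsum 1 L (fun c =>
    F a s * F b s * F c s)))) 0 1.
Proof.
  apply (ex_RInt_rsum 1 L (fun a s => rsum 1 L (fun b => rsum 1 L (fun c => F a s * F b s * F c s)))); intros.
  apply (ex_RInt_rsum 1 L (fun b s => rsum 1 L (fun c => F i s * F b s * F c s))); intros.
  apply (ex_RInt_rsum 1 L (fun c s => F i s * F i0 s * F c s)); intros. unfold F, Fm; exri.
Qed.

Lemma int_S : RInt (fun s => rsum 1 L (fun l => F l s)) 0 1 = 0.
Proof.
  rewrite RInt_rsum by (intros; apply exF).
  rewrite (rsum_ext_in _ _ _ (fun _ => 0)). apply rsum_zero.
  intros; apply int_F; lia.
Qed.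

Lemma int_S2 : RInt (fun s => rsum 1 L (fun a => rsum 1 L (fun b => F a s * F b s))) 0 1
  = / 2 * rsum 1 L (fun l => rho l ^ 2).
Proof.
  rewrite (RInt_rsum 1 L (fun a s => rsum 1 L (fun b => F a s * F b s))).
  2:{ intros. apply (ex_RInt_rsum 1 L (fun b s => F i s * F b s)); intros. unfold F, Fm; exri. }
  rewrite <- rsum_scal. apply rsum_ext_in; intros a Ha.
  rewrite (RInt_rsum 1 L (fun b s => F a s * F b s)) by (intros; unfold F, Fm; exri).
  rewrite (rsum_ext_in _ _ _ (fun b => if Nat.eqb a b then / 2 * rho a ^ 2 else 0)).
  - apply rsum_ind'. lia.
  - intros b Hb. unfold F. apply int_FF; lia.
Qed.

Definition G3 a b c := if Nat.eqb a (b + c) then rho a * rho b * rho c * cos (psi a - psi b - psi c) else 0.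

Lemma int_S3 : RInt (fun s => rsum 1 L (fun a => rsum 1 L (fun b => rsum 1 L (fun c =>
    F a s * F b s * F c s)))) 0 1 = 3 / 4 * rsum3 L G3.
Proof.
  rewrite (RInt_rsum 1 L (fun a s => rsum 1 L (fun b => rsum 1 L (fun c => F a s * F b s * F c s)))).
  2:{ intros. apply (ex_RInt_rsum 1 L (fun b s => rsum 1 L (fun c => F i s * F b s * F c s))); intros.
      apply (ex_RInt_rsum 1 L (fun c s => F i s * F i0 s * F c s)); intros. unfold F, Fm; exri. }
  transitivity (rsum3 L (fun a b c => / 4 * (rho a * rho b * rho c) *
   ((if Nat.eqb c (a + b) then cos (psi c - psi a - psi b) else 0)
  + (if Nat.eqb b (a + c) then cos (psi b - psi a - psi c) else 0)
  + (if Nat.eqb a (b + c) then cos (psi a - psi b - psi c) else 0)))).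
  { unfold rsum3. apply rsum_ext_in; intros a Ha.
    rewrite (RInt_rsum 1 L (fun b s => rsum 1 L (fun c => F a s * F b s * F c s))).
    2:{ intros. apply (ex_RInt_rsum 1 L (fun c s => F a s * F i s * F c s)); intros. unfold F, Fm; exri. }
    apply rsum_ext_in; intros b Hb.
    rewrite (RInt_rsum 1 L (fun c s => F a s * F b s * F c s)) by (intros; unfold F, Fm; exri).
    apply rsum_ext_in; intros c Hc. unfold F. apply int_FFF; lia. }
  rewrite (rsum3_ext L _ (fun a b c => / 4 * G3 c a b + / 4 * G3 b a c + / 4 * G3 a b c)).
  - rewrite !rsum3_plus, !rsum3_scal, (rsum3_cab L G3), (rsum3_bac L G3). change (@eq R (/ 4 * rsum3 L G3 + / 4 * rsum3 L G3 + / 4 * rsum3 L G3) (3 / 4 * rsum3 L G3)). field.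
  - intros a b c. unfold G3.
    destruct (Nat.eqb c (a + b)); destruct (Nat.eqb b (a + c)); destruct (Nat.eqb a (b + c)); ring.
Qed.

Lemma exc (c : R) : ex_RInt (fun _ => c) 0 1.
Proof. apply ex_RInt_const. Qed.

Lemma I1 : RInt (IPf L a0 rho psi t) 0 1 = a0.
Proof.
  unfold IPf. fold F.
  rewrite (RInt_plus' (fun _ => a0) (fun s => rsum 1 L (fun l => F l s)) 0 1 (exc a0) ex_S).
  rewrite RInt_const', int_S. rring.
Qed.

Lemma I2 : RInt (fun s => IPf L a0 rho psi t s ^ 2) 0 1 =
  a0 ^ 2 + / 2 * rsum 1 L (fun l => rho l ^ 2).
Proof.
  set (S1 := fun s => rsum 1 L (fun l => F l s)).
  set (S2 := fun s => rsum 1 L (fun a => rsum 1 L (fun b => F a s * F b s))).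
  rewrite (RInt_ext _ (fun s => a0 ^ 2 + (2 * a0 * S1 s + S2 s))).
  2:{ intros s _. unfold IPf, S1, S2. fold F. rewrite <- rsum_mult. rring. }
  assert (e1 : ex_RInt (fun s => 2 * a0 * S1 s) 0 1) by (apply ex_RInt_scal'; apply ex_S).
  assert (e2 : ex_RInt S2 0 1) by apply ex_S2.
  rewrite (RInt_plus' (fun _ => a0 ^ 2) (fun s => 2 * a0 * S1 s + S2 s) 0 1 (exc _)
             (ex_RInt_plus' _ _ _ _ e1 e2)).
  rewrite (RInt_plus' (fun s => 2 * a0 * S1 s) S2 0 1 e1 e2).
  rewrite (RInt_scal' S1 0 1 (2 * a0) ex_S).
  unfold S1, S2. rewrite RInt_const', int_S, int_S2. rring.
Qed.

Lemma I3 : RInt (fun s => IPf L a0 rho psi t s ^ 3) 0 1 =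
  a0 ^ 3 + 3 / 2 * a0 * rsum 1 L (fun l => rho l ^ 2) + 3 / 4 * rsum3 L G3.
Proof.
  set (S1 := fun s => rsum 1 L (fun l => F l s)).
  set (S2 := fun s => rsum 1 L (fun a => rsum 1 L (fun b => F a s * F b s))).
  set (S3 := fun s => rsum 1 L (fun a => rsum 1 L (fun b => rsum 1 L (fun c => F a s * F b s * F c s)))).
  rewrite (RInt_ext _ (fun s => a0 ^ 3 + (3 * a0 ^ 2 * S1 s + (3 * a0 * S2 s + S3 s)))).
  2:{ intros s _. unfold IPf, S1, S2, S3. fold F.
      assert (E : rsum 1 L (fun a => rsum 1 L (fun b => rsum 1 L (fun c => F a s * F b s * F c s)))
               = rsum 1 L (fun l => F l s) * rsum 1 L (fun a => rsum 1 L (fun b => F a s * F b s))).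
      { rewrite rsum_mult. apply rsum_ext; intros a.
        apply rsum_ext; intros b. rewrite <- rsum_scal. apply rsum_ext; intros c. ring. }
      rewrite E, <- rsum_mult. rring. }
  assert (e1 : ex_RInt (fun s => 3 * a0 ^ 2 * S1 s) 0 1) by (apply ex_RInt_scal'; apply ex_S).
  assert (e2 : ex_RInt (fun s => 3 * a0 * S2 s) 0 1) by (apply ex_RInt_scal'; apply ex_S2).
  assert (e3 : ex_RInt S3 0 1) by apply ex_S3.
  assert (e23 := ex_RInt_plus' _ _ _ _ e2 e3).
  assert (e123 := ex_RInt_plus' _ _ _ _ e1 e23).
  rewrite (RInt_plus' (fun _ => a0 ^ 3) _ 0 1 (exc _) e123).
  rewrite (RInt_plus' _ _ 0 1 e1 e23).
  rewrite (RInt_plus' _ _ 0 1 e2 e3).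
  rewrite (RInt_scal' S1 0 1 _ ex_S), (RInt_scal' S2 0 1 _ ex_S2).
  unfold S1, S2, S3. rewrite RInt_const', int_S, int_S2, int_S3. match goal with |- @eq _ ?x ?y => change (@eq R x y) end. field.
Qed.
End Ints.


Definition SS L k th ph := tsum (dim L) k (fun idx => Tk L th idx * Tk L ph idx).

Lemma sk_SS L k th ph : sk L k th ph =
  / (2 * INR (fact k)) * (SS L k th th - 2 * SS L k th ph + SS L k ph ph).
Proof.
  unfold sk, SS. f_equal.
  rewrite (tsum_ext _ _ _ (fun idx => (Tk L th idx * Tk L th idx + (-2) * (Tk L th idx * Tk L ph idx))
     + Tk L ph idx * Tk L ph idx)) by (intros; ring).
  rewrite !tsum_plus, tsum_scal. ring.
Qed.

Lemma SS_gen L k th ph lam lamp V : is_phase L th lam -> is_phase L ph lamp ->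
  (forall t, RInt (fun s => IPf L (th 0%nat * ph 0%nat) (fun l => rmag th l * rmag ph l)
                         (fun l => lam l - lamp l) t s ^ k) 0 1 = V) ->
  SS L k th ph = V.
Proof.
  intros H1 H2 HV. unfold SS. rewrite Sk_double.
  rewrite (RInt_ext _ (fun _ => V)).
  - rewrite RInt_const'. rring.
  - intros t _. rewrite <- (HV t). apply RInt_ext; intros s _.
    rewrite (IPg_form L th ph lam lamp t s H1 H2). reflexivity.
Qed.

Section Pair.
Variables (L : nat) (th ph lam lamp : nat -> R).
Hypotheses (H1 : is_phase L th lam) (H2 : is_phase L ph lamp).
Let rho := fun l => rmag th l * rmag ph l.
Let psi := fun l => lam l - lamp l.

Lemma SS1 : SS L 1 th ph = th 0%nat * ph 0%nat.
Proof.
  apply (SS_gen L 1 th ph lam lamp); auto. intros t.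
  transitivity (RInt (IPf L (th 0%nat * ph 0%nat) rho psi t) 0 1).
  - apply RInt_ext; intros; apply pow_1.
  - apply I1.
Qed.

Lemma SS2 : SS L 2 th ph = (th 0%nat * ph 0%nat) ^ 2 + / 2 * rsum 1 L (fun l => rho l ^ 2).
Proof.
  apply (SS_gen L 2 th ph lam lamp); auto. intros t. apply I2.
Qed.

Lemma SS3 : SS L 3 th ph = (th 0%nat * ph 0%nat) ^ 3
   + 3 / 2 * (th 0%nat * ph 0%nat) * rsum 1 L (fun l => rho l ^ 2) + 3 / 4 * rsum3 L (G3 rho psi).
Proof.
  apply (SS_gen L 3 th ph lam lamp); auto. intros t. apply I3.
Qed.
End Pair.


Lemma Cmod_sq (z : C) : Cmod z ^ 2 = fst z ^ 2 + snd z ^ 2.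
Proof. unfold Cmod. apply pow2_sqrt. nra. Qed.

Lemma Cmod_diff_sq (z w : C) :
  Cmod (Cminus z w) ^ 2 = Cmod z ^ 2 + Cmod w ^ 2 - 2 * (fst z * fst w + snd z * snd w).
Proof. rewrite !Cmod_sq. destruct z, w; simpl. ring. Qed.

Lemma Dgen (u1 u2 u3 v1 v2 v3 : C) (r1 r2 r3 q1 q2 q3 a1 a2 a3 b1 b2 b3 : R) :
  Cmod u1 = r1 -> Cmod u2 = r2 -> Cmod u3 = r3 ->
  Cmod v1 = q1 -> Cmod v2 = q2 -> Cmod v3 = q3 ->
  u1 = (r1 * cos a1, r1 * sin a1) -> u2 = (r2 * cos a2, r2 * sin a2) ->
  u3 = (r3 * cos a3, r3 * sin a3) ->
  v1 = (q1 * cos b1, q1 * sin b1) -> v2 = (q2 * cos b2, q2 * sin b2) ->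
  v3 = (q3 * cos b3, q3 * sin b3) ->
  Cmod (Cminus (Cmult u1 (Cconj (Cmult u2 u3))) (Cmult v1 (Cconj (Cmult v2 v3)))) ^ 2 =
  (r1 * r2 * r3) ^ 2 + (q1 * q2 * q3) ^ 2
  - 2 * (r1 * r2 * r3) * (q1 * q2 * q3) * cos ((b1 - b2 - b3) - (a1 - a2 - a3)).
Proof.
  intros M1 M2 M3 N1 N2 N3 E1 E2 E3 F1 F2 F3.
  rewrite Cmod_diff_sq, !Cmod_mult, !Cmod_conj, !Cmod_mult, M1, M2, M3, N1, N2, N3.
  rewrite E1, E2, E3, F1, F2, F3. simpl.
  repeat rewrite ?cos_minus, ?sin_minus. ring.
Qed.

Lemma rsum_ind_f a n p (f : nat -> R) : (a <= p < a + n)%nat ->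
  rsum a n (fun j => if Nat.eqb p j then f j else 0) = f p.
Proof.
  intros H. rewrite <- (rsum_ind' a n p (f p) H). apply rsum_ext; intros j.
  destruct (Nat.eqb_spec p j); subst; reflexivity.
Qed.

Lemma split3 L (D : nat -> nat -> nat -> R) :
  rsum 0 (L + 1) (fun l => rsum 0 (L + 1) (fun l' => rsum 0 (L + 1) (fun l'' =>
     if Nat.eqb l (l' + l'') then D l l' l'' else 0)))
  = D 0%nat 0%nat 0%nat + rsum 1 L (fun l => D l 0%nat l + D l l 0%nat +
      rsum 1 L (fun l' => rsum 1 L (fun l'' => if Nat.eqb l (l' + l'') then D l l' l'' else 0))).
Proof.
  rewrite Nat.add_1_r, rsum_S. f_equal.
  - rewrite rsum_S, rsum_S. simpl Nat.eqb at 1. cbv iota.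
    rewrite (rsum_ext_in 1 L _ (fun _ => 0)).
    2:{ intros i Hi. destruct (Nat.eqb_spec 0 (0 + i)); [lia|reflexivity]. }
    rewrite rsum_zero.
    rewrite (rsum_ext_in 1 L _ (fun _ => 0)).
    2:{ intros i Hi. rewrite (rsum_ext _ _ _ (fun _ => 0)); [apply rsum_zero|].
        intros j. destruct (Nat.eqb_spec 0 (i + j)); [lia|reflexivity]. }
    rewrite rsum_zero. ring.
  - apply rsum_ext_in; intros l Hl. rewrite rsum_S.
    change (fun l'' : nat => if l =? 0 + l'' then D l 0%nat l'' else 0) with (fun j => if l =? j then D l 0%nat j else 0).
    rewrite (rsum_ind_f 0 (S L) l (fun l'' => D l 0%nat l'')) by lia.
    rewrite (rsum_ext_in 1 L _ (fun l' => (if Nat.eqb l l' then D l l' 0%nat else 0) +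
        rsum 1 L (fun l'' => if Nat.eqb l (l' + l'') then D l l' l'' else 0))).
    + rewrite rsum_plus, (rsum_ind_f 1 L l (fun l' => D l l' 0%nat)) by lia. ring.
    + intros l' Hl'. rewrite rsum_S. rewrite Nat.add_0_r. reflexivity.
Qed.


Lemma rsum_lin a n x y z : rsum a n (fun l => x l - 2 * y l + z l) =
  rsum a n x - 2 * rsum a n y + rsum a n z.
Proof.
  rewrite (rsum_ext _ _ _ (fun l => (x l + (-2) * y l) + z l)) by (intros; ring).
  rewrite !rsum_plus, rsum_scal. ring.
Qed.
Lemma rsum3_lin L x y z : rsum3 L (fun a b c => x a b c - 2 * y a b c + z a b c) =
  rsum3 L x - 2 * rsum3 L y + rsum3 L z.
Proof.
  rewrite (rsum3_ext L _ (fun a b c => (x a b c + (-2) * y a b c) + z a b c)) by (intros; ring).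
  rewrite !rsum3_plus, rsum3_scal. ring.
Qed.

Lemma D_l0l th ph l :
  Cmod (Cminus (Cmult (ucoef th l) (Cconj (Cmult (ucoef th 0) (ucoef th l))))
               (Cmult (ucoef ph l) (Cconj (Cmult (ucoef ph 0) (ucoef ph l))))) ^ 2
  = (th 0%nat * rmag th l ^ 2 - ph 0%nat * rmag ph l ^ 2) ^ 2.
Proof.
  unfold rmag. rewrite !Cmod_sq.
  change (ucoef th 0) with (RtoC (th 0%nat)). change (ucoef ph 0) with (RtoC (ph 0%nat)).
  destruct (ucoef th l) as [x y]; destruct (ucoef ph l) as [x' y']. simpl. ring.
Qed.
Lemma D_ll0 th ph l :
  Cmod (Cminus (Cmult (ucoef th l) (Cconj (Cmult (ucoef th l) (ucoef th 0))))
               (Cmult (ucoef ph l) (Cconj (Cmult (ucoef ph l) (ucoef ph 0))))) ^ 2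
  = (th 0%nat * rmag th l ^ 2 - ph 0%nat * rmag ph l ^ 2) ^ 2.
Proof.
  unfold rmag. rewrite !Cmod_sq.
  change (ucoef th 0) with (RtoC (th 0%nat)). change (ucoef ph 0) with (RtoC (ph 0%nat)).
  destruct (ucoef th l) as [x y]; destruct (ucoef ph l) as [x' y']. simpl. ring.
Qed.
Lemma D000 th ph :
  Cmod (Cminus (Cmult (ucoef th 0) (Cconj (Cmult (ucoef th 0) (ucoef th 0))))
               (Cmult (ucoef ph 0) (Cconj (Cmult (ucoef ph 0) (ucoef ph 0))))) ^ 2
  = (th 0%nat ^ 3 - ph 0%nat ^ 3) ^ 2.
Proof. rewrite Cmod_sq. simpl. ring. Qed.
Lemma X000 th ph :
  Cmod (Cminus (Cmult (ucoef th 0) (Cmult (ucoef th 0) (ucoef th 0)))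
               (Cmult (ucoef ph 0) (Cmult (ucoef ph 0) (ucoef ph 0)))) ^ 2
  = (th 0%nat ^ 3 - ph 0%nat ^ 3) ^ 2.
Proof. rewrite Cmod_sq. simpl. ring. Qed.

Lemma phase_pair L th lam l : is_phase L th lam -> (1 <= l <= L)%nat ->
  ucoef th l = (rmag th l * cos (lam l), rmag th l * sin (lam l)).
Proof. intros H Hl. apply H; exact Hl. Qed.

Theorem theorem3p3 (L : nat) (HL : (1 <= L)%nat)
  (theta thetas : nat -> R) (lam lams : nat -> R)
  (Hlam : is_phase L theta lam) (Hlams : is_phase L thetas lams) :
  let r := rmag theta in
  let rs := rmag thetas in
  let u := ucoef theta in
  let us := ucoef thetas in
  sk L 1 theta thetas = / 2 * (theta 0%nat - thetas 0%nat) ^ 2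
  /\
  sk L 2 theta thetas =
    / 4 * (theta 0%nat ^ 2 - thetas 0%nat ^ 2) ^ 2
    + / 8 * rsum 1 L (fun l => (r l ^ 2 - rs l ^ 2) ^ 2)
  /\
  sk L 3 theta thetas =
    / 48 * Cmod (Cminus (Cmult (u 0%nat) (Cmult (u 0%nat) (u 0%nat)))
                        (Cmult (us 0%nat) (Cmult (us 0%nat) (us 0%nat)))) ^ 2
    + / 16 * rsum 0 (L + 1) (fun l => rsum 0 (L + 1) (fun l' => rsum 0 (L + 1)
        (fun l'' =>
           if Nat.eqb l (l' + l'') then
             Cmod (Cminus (Cmult (u l) (Cconj (Cmult (u l') (u l''))))
                          (Cmult (us l) (Cconj (Cmult (us l') (us l''))))) ^ 2
           else 0)))
  /\
  sk L 3 theta thetas =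
    / 12 * (theta 0%nat ^ 3 - thetas 0%nat ^ 3) ^ 2
    + / 8 * rsum 1 L (fun l => (theta 0%nat * r l ^ 2 - thetas 0%nat * rs l ^ 2) ^ 2)
    + / 16 * rsum 1 L (fun l => rsum 1 L (fun l' => rsum 1 L (fun l'' =>
        if Nat.eqb l (l' + l'') then
          (r l * r l' * r l'') ^ 2 + (rs l * rs l' * rs l'') ^ 2
          - 2 * (r l * r l' * r l'') * (rs l * rs l' * rs l'')
              * cos ((lams l - lams l' - lams l'') - (lam l - lam l' - lam l''))
        else 0))).
Proof.
  cbv zeta.
  set (rt := rmag theta). set (rs := rmag thetas).
  assert (F1 : INR (fact 1) = 1) by (simpl; ring).
  assert (F2 : INR (fact 2) = 2) by (simpl; ring).
  assert (F3 : INR (fact 3) = 6) by (simpl; ring).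
  assert (M2 : rsum 1 L (fun l => (theta 0%nat * rt l ^ 2 - thetas 0%nat * rs l ^ 2) ^ 2) =
     theta 0%nat ^ 2 * rsum 1 L (fun l => (rt l * rt l) ^ 2)
     - 2 * (theta 0%nat * thetas 0%nat) * rsum 1 L (fun l => (rt l * rs l) ^ 2)
     + thetas 0%nat ^ 2 * rsum 1 L (fun l => (rs l * rs l) ^ 2)).
  { rewrite (rsum_ext _ _ _ (fun l => theta 0%nat ^ 2 * (rt l * rt l) ^ 2
       + (- 2 * (theta 0%nat * thetas 0%nat)) * (rt l * rs l) ^ 2
       + thetas 0%nat ^ 2 * (rs l * rs l) ^ 2)) by (intros; ring).
    rewrite !rsum_plus, !rsum_scal. ring. }
  assert (T3 : rsum 1 L (fun l => rsum 1 L (fun l' => rsum 1 L (fun l'' =>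
        if Nat.eqb l (l' + l'') then
          (rt l * rt l' * rt l'') ^ 2 + (rs l * rs l' * rs l'') ^ 2
          - 2 * (rt l * rt l' * rt l'') * (rs l * rs l' * rs l'')
              * cos ((lams l - lams l' - lams l'') - (lam l - lam l' - lam l''))
        else 0))) =
     rsum3 L (G3 (fun l => rt l * rt l) (fun l => lam l - lam l))
     - 2 * rsum3 L (G3 (fun l => rt l * rs l) (fun l => lam l - lams l))
     + rsum3 L (G3 (fun l => rs l * rs l) (fun l => lams l - lams l))).
  { rewrite <- rsum3_lin. unfold rsum3. apply rsum_ext; intros a; apply rsum_ext; intros b;
    apply rsum_ext; intros c. unfold G3. destruct (Nat.eqb a (b + c)); [|ring].
    replace (lam a - lam a - (lam b - lam b) - (lam c - lam c)) with 0 by ring.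
    replace (lams a - lams a - (lams b - lams b) - (lams c - lams c)) with 0 by ring.
    replace (lams a - lams b - lams c - (lam a - lam b - lam c)) with
      (- (lam a - lams a - (lam b - lams b) - (lam c - lams c))) by ring.
    rewrite cos_neg, cos_0. ring. }
  assert (C4 : sk L 3 theta thetas =
    / 12 * (theta 0%nat ^ 3 - thetas 0%nat ^ 3) ^ 2
    + / 8 * rsum 1 L (fun l => (theta 0%nat * rt l ^ 2 - thetas 0%nat * rs l ^ 2) ^ 2)
    + / 16 * rsum 1 L (fun l => rsum 1 L (fun l' => rsum 1 L (fun l'' =>
        if Nat.eqb l (l' + l'') then
          (rt l * rt l' * rt l'') ^ 2 + (rs l * rs l' * rs l'') ^ 2
          - 2 * (rt l * rt l' * rt l'') * (rs l * rs l' * rs l'')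
              * cos ((lams l - lams l' - lams l'') - (lam l - lam l' - lam l''))
        else 0)))).
  { rewrite T3, M2, sk_SS, F3.
    rewrite (SS3 L theta theta lam lam Hlam Hlam), (SS3 L theta thetas lam lams Hlam Hlams),
            (SS3 L thetas thetas lams lams Hlams Hlams).
    fold rt rs. field. }
  split; [|split; [|split]].
  - rewrite sk_SS, F1.
    rewrite (SS1 L theta theta lam lam Hlam Hlam), (SS1 L theta thetas lam lams Hlam Hlams),
            (SS1 L thetas thetas lams lams Hlams Hlams). field.
  - rewrite sk_SS, F2.
    rewrite (SS2 L theta theta lam lam Hlam Hlam), (SS2 L theta thetas lam lams Hlam Hlams),
            (SS2 L thetas thetas lams lams Hlams Hlams). fold rt rs.
    assert (E : rsum 1 L (fun l => (rt l ^ 2 - rs l ^ 2) ^ 2) =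
      rsum 1 L (fun l => (rt l * rt l) ^ 2) - 2 * rsum 1 L (fun l => (rt l * rs l) ^ 2)
      + rsum 1 L (fun l => (rs l * rs l) ^ 2)).
    { rewrite <- rsum_lin. apply rsum_ext; intros; ring. }
    rewrite E. field.
  - rewrite C4. symmetry.
    rewrite (split3 L (fun l l' l'' =>
       Cmod (Cminus (Cmult (ucoef theta l) (Cconj (Cmult (ucoef theta l') (ucoef theta l''))))
                    (Cmult (ucoef thetas l) (Cconj (Cmult (ucoef thetas l') (ucoef thetas l''))))) ^ 2)).
    cbv beta. rewrite D000, X000.
    rewrite (rsum_ext_in 1 L _ (fun l => 2 * (theta 0%nat * rt l ^ 2 - thetas 0%nat * rs l ^ 2) ^ 2 +
       rsum 1 L (fun l' => rsum 1 L (fun l'' =>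
        if Nat.eqb l (l' + l'') then
          (rt l * rt l' * rt l'') ^ 2 + (rs l * rs l' * rs l'') ^ 2
          - 2 * (rt l * rt l' * rt l'') * (rs l * rs l' * rs l'')
              * cos ((lams l - lams l' - lams l'') - (lam l - lam l' - lam l''))
        else 0)))).
    + rewrite rsum_plus, rsum_scal. field.
    + intros l Hl. rewrite D_l0l, D_ll0. fold rt rs.
      f_equal; [ring|].
      apply rsum_ext_in; intros l' Hl'. apply rsum_ext_in; intros l'' Hl''.
      destruct (Nat.eqb_spec l (l' + l'')); [|reflexivity].
      apply (Dgen _ _ _ _ _ _ _ _ _ _ _ _ (lam l) (lam l') (lam l'') (lams l) (lams l') (lams l''));
        try reflexivity; apply (phase_pair L); auto; lia.
  - exact C4.
Qed.
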